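(* Let $n\ge 2$. For every triangulation $T$ of the cyclic polytope $C(n+2,3)$, the graph $\Gamma(T) := ([n], F_1(T)\cap \binom{[n]}{2})$ is a persistent graph on $n$ vertices.
   Context: The cyclic polytope $C(n+2,3)$ is the convex hull of $n+2$ points on the moment curve $t\mapsto(t,t^2,t^3)$, with vertices labelled $0,1,\dots,n+1$ in increasing order of the parameter; faces are identified with their vertex sets. A triangulation of $C(n+2,3)$ is a set $T$ of 3-simplices (4-element subsets of $\{0,\dots,n+1\}$) such that the union of their convex hulls is the polytope and any two of them intersect in a common (possibly empty) face. $F_1(T)$ is the set of 2-element subsets contained in some simplex of $T$; thus $i,j\in[n]$ are adjacent in $\Gamma(T)$ iff $\{i,j\}\subseteq S$ for some $S\in T$. A graph $G=([n],E)$ is persistent if (1) $\{i,i+1\}\in E$ for all $1\le i<n$; (2) (X-property) if $\{a,c\},\{b,d\}\in E$ for $a<b<c<d$ then $\{a,d\}\in E$; (3) (bar-property) for every edge $\{a,b\}\in E$ with $a<b-1$ there is $x$ with $a<x<b$ and $\{a,x\},\{x,b\}\in E$. *)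

(* Defs.v *)
From HB Require Import structures.
From mathcomp Require Import all_boot all_order all_algebra.
From mathcomp Require Import reals.
Set Implicit Arguments. Unset Strict Implicit. Unset Printing Implicit Defensive.
Import Order.TTheory GRing.Theory Num.Theory.
Local Open Scope ring_scope.

Definition pt (R : realType) := 'I_3 -> R.

Definition moment_pt (R : realType) (N : nat) (t : 'I_N -> R) (i : 'I_N) : pt R :=
  fun k => t i ^+ (val k).+1.

Definition conv (R : realType) (N : nat) (p : 'I_N -> pt R) (S : {set 'I_N})
  (x : pt R) : Prop :=
  exists w : 'I_N -> R,
    [/\ forall i, 0 <= w i,
        forall i, i \notin S -> w i = 0,
        \sum_(i < N) w i = 1
      & forall k, x k = \sum_(i < N) w i * p i k].

Definition dot (R : realType) (a x : pt R) : R := \sum_(k < 3) a k * x k.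

(* F is a face of the convex set P: F = P \cap H for some hyperplane
   H = {a.x = b} with P contained in {a.x <= b} (a = 0 allowed, giving P and
   the empty face). *)
Definition is_face (R : realType) (P F : pt R -> Prop) : Prop :=
  exists (a : pt R) (b : R),
    (forall x, P x -> dot a x <= b) /\
    (forall x, F x <-> (P x /\ dot a x = b)).

Definition triangulation (R : realType) (N : nat) (t : 'I_N -> R)
  (T : {set {set 'I_N}}) : Prop :=
  let p := moment_pt t in
  [/\ forall S, S \in T -> #|S| = 4%N,
      (forall x, conv p [set: 'I_N] x <-> exists2 S, S \in T & conv p S x)
    & forall S1 S2, S1 \in T -> S2 \in T ->
        is_face (conv p S1) (fun x => conv p S1 x /\ conv p S2 x) /\
        is_face (conv p S2) (fun x => conv p S1 x /\ conv p S2 x)].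

(* The graph Gamma(T) on [n] = {1,...,n}, for T a triangulation of C(n+2,3)
   (vertices labelled 0..n+1): adjacency of i, j. *)
Definition Gamma (n : nat) (T : {set {set 'I_(n.+2)}}) (i j : nat) : Prop :=
  [/\ (1 <= i <= n)%N, (1 <= j <= n)%N, i <> j &
      exists2 S, S \in T &
        exists (i' j' : 'I_(n.+2)), [/\ val i' = i, val j' = j, i' \in S & j' \in S]].

Definition persistent (n : nat) (adj : nat -> nat -> Prop) : Prop :=
  [/\ (forall i, (1 <= i)%N -> (i < n)%N -> adj i i.+1),
      (forall a b c d, (1 <= a)%N -> (a < b)%N -> (b < c)%N -> (c < d)%N ->
         (d <= n)%N -> adj a c -> adj b d -> adj a d)
    & (forall a b, (1 <= a)%N -> (a.+1 < b)%N -> (b <= n)%N -> adj a b ->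
         exists x, [/\ (a < x)%N, (x < b)%N, adj a x & adj x b])].

(* Main.v *)
Require Import Defs.
From HB Require Import structures.
From mathcomp Require Import all_boot all_order all_algebra.
From mathcomp Require Import reals.
From mathcomp Require Import ring lra zify.
From Stdlib Require Import Classical.
Set Implicit Arguments. Unset Strict Implicit. Unset Printing Implicit Defensive.
Import Order.TTheory GRing.Theory Num.Theory.
Local Open Scope ring_scope.

Definition cub (R : realType) (c0 c1 c2 c3 u : R) := c0 + c1 * u + c2 * u ^+ 2 + c3 * u ^+ 3.
Definition i0 : 'I_3 := @Ordinal 3 0 isT.
Definition i1 : 'I_3 := @Ordinal 3 1 isT.
Definition i2 : 'I_3 := @Ordinal 3 2 isT.
Definition Lf (R : realType) (c0 c1 c2 c3 : R) (x : pt R) :=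
  c0 + c1 * x i0 + c2 * x i1 + c3 * x i2.

Lemma cub_repr (R : realType) (I : Type) (r : seq I) (F : I -> R) :
  (size r <= 3)%N -> exists c0 c1 c2 c3, forall u,
    \prod_(i <- r) (u - F i) = cub c0 c1 c2 c3 u.
Proof.
move=> hs; set P := \prod_(i <- r) ('X - (F i)%:P).
exists P`_0, P`_1, P`_2, P`_3 => u.
have hP : (size P <= 4)%N by rewrite size_prod_XsubC.
rewrite -[LHS](_ : P.[u] = _); last first.
  by rewrite horner_prod; apply: eq_bigr => i _; rewrite hornerXsubC.
rewrite (horner_coef_wide u hP) !big_ord_recr big_ord0 /= /cub.
by rewrite add0r expr0 mulr1 expr1.
Qed.

Definition V (R : realType) (a b c d : R) := (b-a)*(c-a)*(d-a)*(c-b)*(d-b)*(d-c).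

Lemma V_gt0 (R : realType) (a b c d : R) : a < b -> b < c -> c < d -> 0 < V a b c d.
Proof.
move=> h1 h2 h3; have h4 := lt_trans h1 h2; have h5 := lt_trans h2 h3; have h6 := lt_trans h4 h3.
by rewrite /V !mulr_gt0 // subr_gt0.
Qed.

Lemma V_id (R : realType) (x1 x2 x3 x4 x5 : R) k : (k <= 3)%N ->
  V x2 x3 x4 x5 * x1 ^+ k - V x1 x3 x4 x5 * x2 ^+ k + V x1 x2 x4 x5 * x3 ^+ k
  - V x1 x2 x3 x5 * x4 ^+ k + V x1 x2 x3 x4 * x5 ^+ k = 0.
Proof. by case: k => [|[|[|[|//]]]] _; rewrite /V; ring. Qed.

Lemma cross_alg (R : realType) (A1 A2 A3 A4 A5 y1 y2 y3 y4 y5 : R) : A2 + A4 != 0 ->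
  A1*y1 - A2*y2 + A3*y3 - A4*y4 + A5*y5 = 0 ->
  A2/(A2+A4) * y2 + (1 - A2/(A2+A4)) * y4 = A1/(A2+A4)*y1 + A3/(A2+A4)*y3 + A5/(A2+A4)*y5.
Proof.
move=> hL h; apply/eqP; rewrite -subr_eq0.
have -> : A2/(A2+A4) * y2 + (1 - A2/(A2+A4)) * y4 - (A1/(A2+A4)*y1 + A3/(A2+A4)*y3 + A5/(A2+A4)*y5)
  = - (A1*y1 - A2*y2 + A3*y3 - A4*y4 + A5*y5) / (A2 + A4) by field.
by rewrite h oppr0 mul0r.
Qed.

Section Main.
Variable R : realType.
Variable n : nat.
Local Notation N := n.+2.
Variable t : 'I_N -> R.
Hypothesis tmono : forall i j : 'I_N, (i < j)%N -> t i < t j.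
Local Notation p := (moment_pt t).

Lemma tlt (i j : 'I_N) : (t i < t j) = (i < j)%N.
Proof.
apply/idP/idP; last exact: tmono.
apply: contraTT; rewrite -leqNgt -leNgt leq_eqVlt => /orP[/eqP/val_inj->//|/tmono/ltW//].
Qed.

Lemma tle (i j : 'I_N) : (t i <= t j) = (i <= j)%N.
Proof. by rewrite leNgt tlt -leqNgt. Qed.

Lemma teq (i j : 'I_N) : (t i == t j) = (i == j).
Proof. by rewrite eq_le !tle -eqn_leq val_eqE. Qed.

Definition dl (a k : 'I_N) : R := (k == a)%:R.

Lemma dl_ge0 a k : 0 <= dl a k. Proof. by rewrite /dl ler0n. Qed.

Lemma sum_dl a (F : 'I_N -> R) : \sum_k dl a k * F k = F a.
Proof.
rewrite (bigD1 a) //= /dl eqxx mul1r big1 ?addr0 // => k /negbTE ->.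
by rewrite mul0r.
Qed.

Lemma sum_lin (al be : R) (f g F : 'I_N -> R) :
  \sum_k (al * f k + be * g k) * F k =
  al * \sum_k f k * F k + be * \sum_k g k * F k.
Proof. rewrite !mulr_sumr -big_split /=; apply: eq_bigr => k _; ring. Qed.

Lemma sum_lin3 (al be ga : R) (f g h F : 'I_N -> R) :
  \sum_k (al * f k + be * g k + ga * h k) * F k =
  al * \sum_k f k * F k + be * \sum_k g k * F k + ga * \sum_k h k * F k.
Proof.
rewrite !mulr_sumr -!big_split /=; apply: eq_bigr => k _; ring.
Qed.

Lemma sum_nz (F : 'I_N -> R) : \sum_k F k != 0 -> exists k, F k != 0.
Proof.
move=> h; case: (pickP (fun k => F k != 0)) => [k hk|h0]; first by exists k.
by move: h; rewrite big1 ?eqxx // => k _; move/negbFE/eqP: (h0 k).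
Qed.

Lemma supp0 (w F : 'I_N -> R) : (forall k, 0 <= w k) -> (forall k, 0 <= F k) ->
  \sum_k w k * F k = 0 -> forall k, F k != 0 -> w k = 0.
Proof.
move=> hw hF hs k hk.
have := @psumr_eq0P _ _ predT (fun k => w k * F k) (fun k _ => mulr_ge0 (hw k) (hF k)) hs k isT.
by move/eqP; rewrite mulf_eq0 (negbTE hk) orbF => /eqP.
Qed.

Lemma supp0n (w F : 'I_N -> R) : (forall k, 0 <= w k) -> (forall k, F k <= 0) ->
  \sum_k w k * F k = 0 -> forall k, F k != 0 -> w k = 0.
Proof.
move=> hw hF hs k hk; apply: (@supp0 w (fun k => - F k)) => //.
- by move=> j; rewrite oppr_ge0.
- by rewrite (eq_bigr (fun k => - (w k * F k))) ?sumrN ?hs ?oppr0 // => j _; rewrite mulrN.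
- by rewrite oppr_eq0.
Qed.

Lemma eval_cub c0 c1 c2 c3 (w : 'I_N -> R) (x : pt R) :
  \sum_k w k = 1 -> (forall j, x j = \sum_k w k * p k j) ->
  \sum_k w k * cub c0 c1 c2 c3 (t k) = Lf c0 c1 c2 c3 x.
Proof.
move=> hw hx; rewrite /Lf !hx /moment_pt /= -[c0 in RHS]mulr1 -hw.
rewrite !mulr_sumr -!big_split /=; apply: eq_bigr => k _; rewrite /cub; ring.
Qed.

Lemma Lf_p c0 c1 c2 c3 a : Lf c0 c1 c2 c3 (p a) = cub c0 c1 c2 c3 (t a).
Proof. by rewrite /Lf /cub /moment_pt /= expr1. Qed.

Definition comb (mu : R) (a c : 'I_N) : pt R := fun j => mu * p a j + (1 - mu) * p c j.

Lemma Lf_comb c0 c1 c2 c3 mu a c :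
  Lf c0 c1 c2 c3 (comb mu a c) = mu * cub c0 c1 c2 c3 (t a) + (1 - mu) * cub c0 c1 c2 c3 (t c).
Proof. rewrite /Lf /cub /comb /moment_pt /= !expr1; ring. Qed.

Lemma inS (S : {set 'I_N}) (w : 'I_N -> R) k :
  (forall i, i \notin S -> w i = 0) -> w k != 0 -> k \in S.
Proof. by move=> h; apply: contraR => /h ->; rewrite eqxx. Qed.

Lemma conv_comb (S : {set 'I_N}) mu a c : 0 <= mu <= 1 -> a \in S -> c \in S ->
  conv p S (comb mu a c).
Proof.
move=> /andP[h0 h1] ha hc.
exists (fun k => mu * dl a k + (1 - mu) * dl c k); split.
- by move=> k; rewrite addr_ge0 // mulr_ge0 // ?dl_ge0 // subr_ge0.
- move=> k hk; rewrite /dl.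
  have -> : (k == a) = false by apply/negbTE; apply: contraNneq hk => ->.
  have -> : (k == c) = false by apply/negbTE; apply: contraNneq hk => ->.
  by rewrite !mulr0 addr0.
- rewrite (eq_bigr (fun k => (mu * dl a k + (1 - mu) * dl c k) * 1)); last by move=> *; rewrite mulr1.
  by rewrite sum_lin !(eq_bigr _ (fun k _ => mulr1 (dl _ k))) -!(eq_bigr _ (fun k _ => mulr1 (dl _ k))) !sum_dl !mulr1 addrC subrK.
- by move=> j; rewrite sum_lin !sum_dl.
Qed.

Lemma conv_vertex (S : {set 'I_N}) a : a \in S -> conv p S (p a).
Proof.
move=> ha; have := conv_comb (mu := 1) (c := a) _ ha ha.
rewrite ler01 lexx => /(_ isT) [w [h1 h2 h3 h4]]; exists w; split => // j.
by rewrite -h4 /comb subrr mul0r addr0 mul1r.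
Qed.

Lemma vertex (S : {set 'I_N}) a : conv p S (p a) -> a \in S.
Proof.
case=> w [w0 wS w1 wx].
have [c0 [c1 [c2 [c3 hc]]]] := @cub_repr R _ [:: t a; t a] id isT.
have e := eval_cub c0 c1 c2 c3 w1 wx.
rewrite Lf_p -hc !big_cons big_nil subrr mul0r in e.
have hz := supp0 w0 (F := fun k => cub c0 c1 c2 c3 (t k)) _ e.
have hF : forall k, cub c0 c1 c2 c3 (t k) = (t k - t a) ^+ 2.
  by move=> k; rewrite -hc !big_cons big_nil mulr1 expr2.
have hwk : forall k, k != a -> w k = 0.
  move=> k hk; apply: hz; first by move=> j; rewrite hF sqr_ge0.
  by rewrite hF sqrf_eq0 subr_eq0 teq.
apply: (inS wS); move: w1; rewrite (bigD1 a) //= big1 ?addr0.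
  by move=> ->; rewrite oner_eq0.
by move=> k /hwk.
Qed.

Lemma dot_comb (al : pt R) mu a c :
  dot al (comb mu a c) = mu * dot al (p a) + (1 - mu) * dot al (p c).
Proof. rewrite /dot /comb !mulr_sumr -big_split /=; apply: eq_bigr => k _; ring. Qed.

Variable T : {set {set 'I_N}}.
Hypothesis HT : triangulation t T.

Lemma Tcard S : S \in T -> #|S| = 4%N.
Proof. by case: HT => h _ _; apply: h. Qed.

Lemma Tcov x : conv p [set: 'I_N] x -> exists2 S, S \in T & conv p S x.
Proof. by case: HT => _ h _; move/h. Qed.

Lemma face_lem S1 S2 a c mu : S1 \in T -> S2 \in T -> a \in S1 -> c \in S1 ->
  0 < mu < 1 -> conv p S2 (comb mu a c) -> a \in S2 /\ c \in S2.
Proof.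
move=> h1 h2 ha hc /andP[m0 m1] q2.
have q1 : conv p S1 (comb mu a c) by apply: conv_comb => //; rewrite ltW // ltW.
case: HT => _ _ /(_ S1 S2 h1 h2) [[al [be [hle hF]]] _].
have [_ e] := proj1 (hF _) (conj q1 q2).
have la := hle _ (conv_vertex ha); have lc := hle _ (conv_vertex hc).
rewrite dot_comb in e.
have ea : dot al (p a) = be by nra.
have ec : dot al (p c) = be by nra.
split; apply: vertex.
- by have [] := proj2 (hF (p a)) (conj (conv_vertex ha) ea).
- by have [] := proj2 (hF (p c)) (conj (conv_vertex hc) ec).
Qed.

Lemma edge_mid (S : {set 'I_N}) (w : 'I_N -> R) a d mu : a != d -> 0 < mu < 1 ->
  (forall k, 0 <= w k) -> (forall i, i \notin S -> w i = 0) -> \sum_k w k = 1 ->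
  (forall j, comb mu a d j = \sum_k w k * p k j) ->
  (forall k, w k != 0 -> k = a \/ k = d) -> a \in S /\ d \in S.
Proof.
move=> had /andP[m0 m1] w0 wS w1 wx hsup.
have key : forall u v, u != v -> (forall k, w k != 0 -> k = u \/ k = v) ->
   Lf (- t v) 1 0 0 (comb mu a d) != 0 -> u \in S.
  move=> u v huv hs hL.
  have e := eval_cub (- t v) 1 0 0 w1 wx.
  rewrite -e in hL; have [k hk] := sum_nz hL.
  have wk : w k != 0 by apply: contraNneq hk => ->; rewrite mul0r.
  have ck : k != v.
    by apply: contraNneq hk => ->; rewrite /cub !mul0r !addr0 mul1r addrC subrr mulr0.
  case: (hs k wk) => [hku|hkv]; first by rewrite -hku; exact: inS wS wk.
  by move: ck; rewrite hkv eqxx.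
have hcub : forall v u, cub (- t v) 1 0 0 u = u - t v.
  by move=> v u; rewrite /cub !mul0r !addr0 mul1r addrC.
have tad : t a != t d by rewrite teq.
split.
- apply: (key a d had hsup).
  rewrite Lf_comb !hcub subrr mulr0 addr0 mulf_neq0 //; first by rewrite gt_eqF.
  by rewrite subr_eq0.
- apply: (key d a); first by rewrite eq_sym.
    by move=> k /hsup []; auto.
  rewrite Lf_comb !hcub subrr mulr0 add0r mulf_neq0 //; first by rewrite subr_eq0 gt_eqF.
  by rewrite subr_eq0 eq_sym.
Qed.

Lemma cross (S : {set 'I_N}) (u1 u2 u3 u4 u5 : 'I_N) :
  (u1 < u2)%N -> (u2 < u3)%N -> (u3 < u4)%N -> (u4 < u5)%N ->
  u1 \in S -> u3 \in S -> u5 \in S ->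
  exists mu, 0 < mu < 1 /\ conv p S (comb mu u2 u4).
Proof.
move=> l12 l23 l34 l45 h1 h3 h5.
have t12 := tmono l12; have t23 := tmono l23; have t34 := tmono l34; have t45 := tmono l45.
have t13 := lt_trans t12 t23; have t24 := lt_trans t23 t34; have t35 := lt_trans t34 t45.
have p1 := V_gt0 t23 t34 t45; have p2 := V_gt0 t13 t34 t45.
have p3 := V_gt0 t12 t24 t45; have p4 := V_gt0 t12 t23 t35.
have p5 := V_gt0 t12 t23 t34.
have idk := V_id (t u1) (t u2) (t u3) (t u4) (t u5).
move: p1 p2 p3 p4 p5 idk.
move: (V (t u2) _ _ _) (V (t u1) (t u3) _ _) (V (t u1) (t u2) (t u4) _)
      (V (t u1) (t u2) (t u3) (t u5)) (V (t u1) (t u2) (t u3) (t u4)).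
move=> A1 A2 A3 A4 A5 p1 p2 p3 p4 p5 idk.
have pL : 0 < A2 + A4 by rewrite addr_gt0.
have nL : A2 + A4 != 0 by rewrite gt_eqF.
exists (A2 / (A2 + A4)); split.
  rewrite divr_gt0 //= ltr_pdivrMr // mul1r ltrDl //.
exists (fun k => A1/(A2+A4) * dl u1 k + A3/(A2+A4) * dl u3 k + A5/(A2+A4) * dl u5 k); split.
- by move=> k; rewrite !addr_ge0 // mulr_ge0 ?dl_ge0 // ltW // divr_gt0.
- move=> k hk; rewrite /dl.
  have -> : (k == u1) = false by apply/negbTE; apply: contraNneq hk => ->.
  have -> : (k == u3) = false by apply/negbTE; apply: contraNneq hk => ->.
  have -> : (k == u5) = false by apply/negbTE; apply: contraNneq hk => ->.
  by rewrite !mulr0 !addr0.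
- rewrite (eq_bigr (fun k => (A1/(A2+A4) * dl u1 k + A3/(A2+A4) * dl u3 k + A5/(A2+A4) * dl u5 k) * 1)); last by move=> *; rewrite mulr1.
  rewrite sum_lin3 !sum_dl !mulr1.
  have := idk 0%N isT; rewrite !expr0 !mulr1 => h0.
  apply/eqP; rewrite -subr_eq0.
  have -> : A1 / (A2 + A4) + A3 / (A2 + A4) + A5 / (A2 + A4) - 1 = (A1 - A2 + A3 - A4 + A5) / (A2 + A4) by field.
  by rewrite h0 mul0r.
- move=> j; rewrite sum_lin3 !sum_dl /comb /moment_pt.
  by apply: cross_alg => //; apply: idk; case: j => [[|[|[|]]]].
Qed.

Lemma noncross S1 S2 (a c x y z : 'I_N) : S1 \in T -> S2 \in T ->
  a \in S1 -> c \in S1 -> x \in S2 -> y \in S2 -> z \in S2 ->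
  (x < a)%N -> (a < y)%N -> (y < c)%N -> (c < z)%N -> False.
Proof.
move=> h1 h2 ha hc hx hy hz l1 l2 l3 l4.
have [mu [hmu hcv]] := cross l1 l2 l3 l4 hx hy hz.
have [ha2 hc2] := face_lem h1 h2 ha hc hmu hcv.
have hu : uniq [:: x; a; y; c; z].
  rewrite /= !inE -!val_eqE /=; lia.
have hs : (mem [:: x; a; y; c; z]) \subset S2.
  apply/subsetP => k; rewrite !inE.
  by move=> /orP[/eqP->|/orP[/eqP->|/orP[/eqP->|/orP[/eqP->|/eqP->]]]].
have := subset_leq_card hs; rewrite (card_uniqP hu) (Tcard h2) /=.
by [].
Qed.

Lemma test_mid (r : seq R) (w : 'I_N -> R) mu a d : (size r <= 3)%N ->
  \sum_k w k = 1 -> (forall j, comb mu a d j = \sum_k w k * p k j) ->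
  \sum_k w k * \prod_(y <- r) (t k - y) =
  mu * \prod_(y <- r) (t a - y) + (1 - mu) * \prod_(y <- r) (t d - y).
Proof.
move=> hr w1 wx; have [c0 [c1 [c2 [c3 hc]]]] := @cub_repr R _ r id hr.
rewrite (eq_bigr (fun k => w k * cub c0 c1 c2 c3 (t k))); last by move=> k _; rewrite hc.
by rewrite (eval_cub _ _ _ _ w1 wx) Lf_comb !hc.
Qed.

Lemma nsum0 (G : 'I_N -> R) : (forall k, G k <= 0) -> \sum_k G k = 0 -> forall k, G k = 0.
Proof.
move=> hG hs k; apply/eqP; rewrite -oppr_eq0; apply/eqP.
apply: (@psumr_eq0P _ _ predT (fun k => - G k)) => //.
- by move=> j _; rewrite oppr_ge0.
- by rewrite sumrN hs oppr0.
Qed.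

Lemma psum0 (G : 'I_N -> R) : (forall k, 0 <= G k) -> \sum_k G k = 0 -> forall k, G k = 0.
Proof. by move=> hG hs k; apply: (@psumr_eq0P _ _ predT G). Qed.

Lemma sge (i j : 'I_N) : (0 <= t i - t j) = (j <= i)%N.
Proof. by rewrite subr_ge0 tle. Qed.
Lemma sle (i j : 'I_N) : (t i - t j <= 0) = (i <= j)%N.
Proof. by rewrite subr_le0 tle. Qed.
Lemma sne (i j : 'I_N) : (t i - t j != 0) = (i != j).
Proof. by rewrite subr_eq0 teq. Qed.

Lemma half01 : 0 < (1/2 : R) < 1.
Proof. apply/andP; split; lra. Qed.

Lemma mid_anal (S : {set 'I_N}) (a d : 'I_N) : (a < d)%N -> conv p S (comb (1/2) a d) ->
  (a \in S /\ d \in S) \/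
  exists x y z : 'I_N, [/\ x \in S, y \in S & z \in S] /\ [/\ (x < a)%N, (a < y)%N, (y < d)%N & (d < z)%N].
Proof.
move=> ad [w [w0 wS w1 wx]].
have e1 : \sum_k w k * ((t k - t a) * (t k - t d)) = 0.
  rewrite (eq_bigr (fun k => w k * \prod_(y <- [:: t a; t d]) (t k - y))); last first.
    by move=> k _; rewrite !big_cons big_nil mulr1.
  rewrite (@test_mid [:: t a; t d] w _ a d isT w1 wx).
  by rewrite !big_cons !big_nil !mulr1 !subrr !mul0r !mulr0 addr0.
have e2 : \sum_k w k * ((t k - t a) * ((t k - t a) * (t k - t d))) = 0.
  rewrite (eq_bigr (fun k => w k * \prod_(y <- [:: t a; t a; t d]) (t k - y))); last first.
    by move=> k _; rewrite !big_cons big_nil mulr1.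
  rewrite (@test_mid [:: t a; t a; t d] w _ a d isT w1 wx).
  by rewrite !big_cons !big_nil !mulr1 !subrr !mul0r !mulr0 addr0.
have e3 : \sum_k w k * ((t k - t a) * ((t k - t d) * (t k - t d))) = 0.
  rewrite (eq_bigr (fun k => w k * \prod_(y <- [:: t a; t d; t d]) (t k - y))); last first.
    by move=> k _; rewrite !big_cons big_nil mulr1.
  rewrite (@test_mid [:: t a; t d; t d] w _ a d isT w1 wx).
  by rewrite !big_cons !big_nil !mulr1 !subrr !mul0r !mulr0 addr0.
have ad' : a != d by rewrite -val_eqE /= neq_ltn ad.
case: (pickP (fun k => (w k != 0) && ((a < k)%N && (k < d)%N))) => [y /andP[wy /andP[ay yd]]|h0].
- right.
  case: (pickP (fun k => (w k != 0) && (d < k)%N)) => [z /andP[wz dz]|hz]; last first.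
    exfalso.
    have hneg : forall k, w k * ((t k - t a) * ((t k - t a) * (t k - t d))) <= 0.
      move=> k; case: (eqVneq (w k) 0) => [->|wk]; first by rewrite mul0r.
      have := hz k; rewrite wk /= => /negbT; rewrite -leqNgt => kd.
      rewrite mulr_ge0_le0 // mulrA ?mulr_ge0_le0 //.
        by rewrite -expr2 sqr_ge0.
      by rewrite sle.
    have := nsum0 hneg e2 y => /eqP; rewrite mulf_eq0 (negbTE wy) /=.
    rewrite !mulf_eq0 !subr_eq0 !teq -!val_eqE /=; lia.
  case: (pickP (fun k => (w k != 0) && (k < a)%N)) => [x /andP[wx' xa]|hx]; last first.
    exfalso.
    have hpos : forall k, 0 <= w k * ((t k - t a) * ((t k - t d) * (t k - t d))).
      move=> k; case: (eqVneq (w k) 0) => [->|wk]; first by rewrite mul0r.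
      have := hx k; rewrite wk /= => /negbT; rewrite -leqNgt => ak.
      rewrite mulr_ge0 // mulr_ge0 ?sge //.
      by rewrite -expr2 sqr_ge0.
    have := psum0 hpos e3 y => /eqP; rewrite mulf_eq0 (negbTE wy) /=.
    rewrite !mulf_eq0 !subr_eq0 !teq -!val_eqE /=; lia.
  exists x, y, z; split; split => //; exact: inS wS _.
- left; apply: (edge_mid ad' half01 w0 wS w1 wx) => k wk.
  have hpos : forall j, 0 <= w j * ((t j - t a) * (t j - t d)).
    move=> j; case: (eqVneq (w j) 0) => [->|wj]; first by rewrite mul0r.
    have := h0 j; rewrite wj /= => /negbT; rewrite negb_and -!leqNgt => /orP[ja|dj].
    + by rewrite mulr_ge0 // mulr_le0 // sle // (leq_trans ja) // ltnW.
    + by rewrite mulr_ge0 // mulr_ge0 // sge // (leq_trans _ dj) // ltnW.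
  have := psum0 hpos e1 k => /eqP; rewrite mulf_eq0 (negbTE wk) /= mulf_eq0 !subr_eq0 !teq.
  by case/orP => /eqP ->; auto.
Qed.

Lemma conv_all mu (a d : 'I_N) : 0 <= mu <= 1 -> conv p [set: 'I_N] (comb mu a d).
Proof. by move=> h; apply: conv_comb; rewrite ?inE. Qed.

Lemma Xprop S1 S2 (a b c d : 'I_N) : S1 \in T -> S2 \in T -> a \in S1 -> c \in S1 ->
  b \in S2 -> d \in S2 -> (a < b)%N -> (b < c)%N -> (c < d)%N ->
  exists2 S, S \in T & a \in S /\ d \in S.
Proof.
move=> h1 h2 ha hc hb hd ab bc cd.
have ad : (a < d)%N by lia.
have [S hS hcv] := Tcov (@conv_all (1/2) a d ltac:(apply/andP; split; lra)).
case: (mid_anal ad hcv) => [hh|[x [y [z [[hx hy hz] [xa ay yd dz]]]]]]; first by exists S.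
exfalso; case: (ltnP y c) => yc.
- exact: (noncross h1 hS ha hc hx hy hz xa ay yc (ltn_trans cd dz)).
- exact: (noncross h2 hS hb hd hx hy hz (ltn_trans xa ab) (leq_trans bc yc) yd dz).
Qed.

Lemma cons_edge (i j : 'I_N) : val j = (val i).+1 -> exists2 S, S \in T & i \in S /\ j \in S.
Proof.
move=> ij.
have [S hS [w [w0 wS w1 wx]]] := Tcov (@conv_all (1/2) i j ltac:(apply/andP; split; lra)).
exists S => //.
have e1 : \sum_k w k * ((t k - t i) * (t k - t j)) = 0.
  rewrite (eq_bigr (fun k => w k * \prod_(y <- [:: t i; t j]) (t k - y))); last first.
    by move=> k _; rewrite !big_cons big_nil mulr1.
  rewrite (@test_mid [:: t i; t j] w _ i j isT w1 wx).
  by rewrite !big_cons !big_nil !mulr1 !subrr !mul0r !mulr0 addr0.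
have ij' : i != j by rewrite -val_eqE ij /= neq_ltn ltnSn.
apply: (edge_mid ij' half01 w0 wS w1 wx) => k wk.
have hpos : forall k, 0 <= w k * ((t k - t i) * (t k - t j)).
  move=> k'; rewrite mulr_ge0 //; case: (leqP k' i) => hk.
  + by rewrite mulr_le0 // sle // ij // ltnW.
  + by apply: mulr_ge0; rewrite sge //; move: ij hk => /= ij hk; lia.
have := psum0 hpos e1 k => /eqP; rewrite mulf_eq0 (negbTE wk) /= mulf_eq0 !subr_eq0 !teq.
by case/orP => /eqP ->; auto.
Qed.

Lemma clas (Q : R -> Prop) :
  ~ (exists d, 0 < d /\ forall e, 0 < e -> e <= d -> ~ Q e) ->
  forall d, 0 < d -> exists e, [/\ 0 < e, e <= d & Q e].
Proof.
move=> h d hd; apply: NNPP => hn; apply: h; exists d; split => // e he hed hq.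
by apply: hn; exists e; split.
Qed.

Definition qpt (a b c : 'I_N) (e : R) : pt R :=
  fun j => comb (1/2) a b j + e * (p c j - comb (1/2) a b j).

Lemma Lf_q c0 c1 c2 c3 a b c e :
  Lf c0 c1 c2 c3 (qpt a b c e) =
  Lf c0 c1 c2 c3 (comb (1/2) a b) + e * (Lf c0 c1 c2 c3 (p c) - Lf c0 c1 c2 c3 (comb (1/2) a b)).
Proof. rewrite /Lf /qpt; ring. Qed.

Lemma conv_q a b c e : 0 <= e <= 1 -> conv p [set: 'I_N] (qpt a b c e).
Proof.
move=> /andP[e0 e1].
exists (fun k => (1-e)/2 * dl a k + (1-e)/2 * dl b k + e * dl c k); split.
- move=> k; rewrite !addr_ge0 // mulr_ge0 ?dl_ge0 //.
  + by rewrite divr_ge0 // subr_ge0.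
  + by rewrite divr_ge0 // subr_ge0.
- by move=> k; rewrite inE.
- rewrite (eq_bigr (fun k => ((1-e)/2 * dl a k + (1-e)/2 * dl b k + e * dl c k) * 1)); last by move=> *; rewrite mulr1.
  rewrite sum_lin3 !sum_dl !mulr1; by field.
- by move=> j; rewrite sum_lin3 !sum_dl /qpt /comb; field.
Qed.

Lemma weight_formula (S : {set 'I_N}) s : #|S| = 4%N -> s \in S ->
  exists c0 c1 c2 c3 pi, pi != 0 /\ forall (w : 'I_N -> R) x,
    (forall i, i \notin S -> w i = 0) -> \sum_k w k = 1 ->
    (forall j, x j = \sum_k w k * p k j) -> w s * pi = Lf c0 c1 c2 c3 x.
Proof.
move=> hc hs.
have hr : size (enum (S :\ s)) = 3%N.
  by rewrite -cardE; move: hc; rewrite (cardsD1 s) hs => [[]].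
have [c0 [c1 [c2 [c3 hcub]]]] := @cub_repr R _ (enum (S :\ s)) t (eq_leq hr).
exists c0, c1, c2, c3, (\prod_(i <- enum (S :\ s)) (t s - t i)); split.
  rewrite prodf_seq_neq0; apply/allP => i; rewrite mem_enum !inE => /andP[his _].
  by rewrite sne eq_sym.
move=> w x wS w1 wx.
rewrite -(eval_cub _ _ _ _ w1 wx) [RHS](bigD1 s) //= -hcub.
rewrite [X in _ = _ + X]big1 ?addr0 // => k ks.
case: (boolP (k \in S)) => kS; last by rewrite wS // mul0r.
rewrite -hcub; apply/eqP; rewrite mulf_eq0 prodf_seq_eq0; apply/orP; right.
by apply/hasP; exists k; [rewrite mem_enum !inE ks kS | rewrite /= subrr eqxx].
Qed.

Lemma bar_local S0 S' (a b c : 'I_N) : S0 \in T -> S' \in T -> a \in S0 -> b \in S0 ->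
  ~ (a \in S' /\ b \in S') ->
  exists d, 0 < d /\ forall e, 0 < e -> e <= d -> ~ conv p S' (qpt a b c e).
Proof.
move=> h0 h' ha hb hnab.
case: (classic (exists d, 0 < d /\ forall e, 0 < e -> e <= d -> ~ conv p S' (qpt a b c e))) => // hno.
exfalso; have H := clas hno.
have [e1 [e1p e1l [w1 [w1p w1S w1s w1x]]]] := H 1 ltr01.
have [e2 [e2p e2l [w2 [w2p w2S w2s w2x]]]] := H (e1/2) (divr_gt0 e1p (ltr0Sn _ 1)).
have e21 : e2 < e1 by apply: (le_lt_trans e2l); rewrite ltr_pdivrMr // ltr_pMr // ltr1n.
have D0 : e1 - e2 != 0 by rewrite subr_eq0 gt_eqF.
pose w0 := fun k => (e1/(e1-e2)) * w2 k + (-e2/(e1-e2)) * w1 k.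
have w0S : forall i, i \notin S' -> w0 i = 0 by move=> i hi; rewrite /w0 w1S // w2S // !mulr0 addr0.
have w0s : \sum_k w0 k = 1.
  rewrite (eq_bigr (fun k => w0 k * 1)); last by move=> *; rewrite mulr1.
  rewrite sum_lin !(eq_bigr _ (fun k _ => mulr1 (w1 k))) !(eq_bigr _ (fun k _ => mulr1 (w2 k))).
  by rewrite w1s w2s; field.
have w0x : forall j, comb (1/2) a b j = \sum_k w0 k * p k j.
  move=> j; rewrite sum_lin -w1x -w2x /qpt; by field.
case: (boolP [forall k, 0 <= w0 k]) => hall.
  have : conv p S' (comb (1/2) a b).
    by exists w0; split => //; move=> k; exact: (forallP hall k).
  by move/(face_lem h0 h' ha hb half01).
move/forallPn: hall => [s]; rewrite -ltNge => w0neg.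
have sS : s \in S' by apply: contraLR w0neg => /w0S ->; rewrite ltxx.
have [c0 [c1 [c2 [c3 [pi [pin hw]]]]]] := weight_formula (Tcard h') sS.
pose al := Lf c0 c1 c2 c3 (comb (1/2) a b).
pose be := Lf c0 c1 c2 c3 (p c) - al.
have P1 : w1 s * pi = al + e1 * be by rewrite (hw _ _ w1S w1s w1x) Lf_q.
have P2 : w2 s * pi = al + e2 * be by rewrite (hw _ _ w2S w2s w2x) Lf_q.
have P0 : w0 s * pi = al.
  rewrite /w0 mulrDl -!mulrA P1 P2; field => //.
have D1p : 0 < w1 s - w0 s by rewrite subr_gt0 (lt_le_trans w0neg).
pose d3 := e1 * (- w0 s) / (2 * (w1 s - w0 s)).
have d3p : 0 < d3 by rewrite /d3 divr_gt0 ?mulr_gt0 // ?oppr_gt0.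
have [e3 [e3p e3l [w3 [w3p w3S w3s w3x]]]] := H d3 d3p.
have P3 : w3 s * pi = al + e3 * be by rewrite (hw _ _ w3S w3s w3x) Lf_q.
have hA : (w3 s - w0 s) * e1 = e3 * (w1 s - w0 s).
  have X3 : (w3 s - w0 s) * pi = e3 * be by rewrite mulrBl P3 P0; ring.
  have X1 : (w1 s - w0 s) * pi = e1 * be by rewrite mulrBl P1 P0; ring.
  apply: (mulIf pin).
  by rewrite mulrAC X3 -[RHS]mulrA X1; ring.
have hB : e3 * (w1 s - w0 s) <= d3 * (w1 s - w0 s) by rewrite ler_wpM2r // ltW.
have hC : d3 * (w1 s - w0 s) = e1 * (- w0 s) / 2.
  by rewrite /d3; field; rewrite gt_eqF.
have hD : 0 <= w3 s * e1 by rewrite mulr_ge0 // ltW.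
have hE : w0 s * e1 < 0 by rewrite pmulr_llt0.
nra.
Qed.

Lemma unif (s : seq {set 'I_N}) (Q : {set 'I_N} -> R -> Prop) :
  (forall S, S \in s -> exists d, 0 < d /\ forall e, 0 < e -> e <= d -> Q S e) ->
  exists d, 0 < d /\ forall S, S \in s -> forall e, 0 < e -> e <= d -> Q S e.
Proof.
elim: s => [|S s IH] h; first by exists 1; split.
have [d1 [d1p h1]] := h S (mem_head _ _).
have [d2 [d2p h2]] := IH (fun S' hS' => h S' ltac:(by rewrite inE hS' orbT)).
exists (Num.min d1 d2); split; first by rewrite lt_min d1p d2p.
move=> S'; rewrite inE => /orP[/eqP-> | hS'] e ep; rewrite le_min => /andP[l1 l2]; auto.
Qed.

Lemma bar S0 (a b : 'I_N) : S0 \in T -> a \in S0 -> b \in S0 -> (a.+1 < b)%N ->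
  exists x : 'I_N, [/\ (a < x)%N, (x < b)%N & exists2 S, S \in T & [/\ a \in S, x \in S & b \in S]].
Proof.
move=> h0 ha hb ab.
have cN : (a.+1 < N)%N by apply: ltn_trans ab (ltn_ord b).
pose c := Ordinal cN.
have hall : forall S, S \in enum T -> exists d, 0 < d /\ forall e, 0 < e -> e <= d ->
    (a \in S /\ b \in S) \/ ~ conv p S (qpt a b c e).
  move=> S; rewrite mem_enum => hS.
  case: (classic (a \in S /\ b \in S)) => hab.
    by exists 1; split => // e _ _; left.
  have [d' [d'p hd']] := bar_local c h0 hS ha hb hab.
  by exists d'; split => // e ep el; right; apply: hd'.
have [d [dp hd]] := unif hall.
pose e := Num.min d 1.
have ep : 0 < e by rewrite lt_min dp ltr01.
have el : e <= d by rewrite ge_min lexx.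
have e1 : e <= 1 by rewrite ge_min lexx orbT.
have [S hS hcv] := Tcov (@conv_q a b c e ltac:(by rewrite (ltW ep) e1)).
have [[aS bS]|//] := hd S ltac:(by rewrite mem_enum) e ep el.
case: hcv => w [w0 wS w1 wx].
have [c0 [c1 [c2 [c3 hc]]]] := @cub_repr R _ [:: t a; t b] id isT.
have E := eval_cub c0 c1 c2 c3 w1 wx.
rewrite (eq_bigr (fun k => w k * ((t k - t a) * (t k - t b)))) in E; last first.
  by move=> k _; rewrite -hc !big_cons big_nil mulr1.
rewrite Lf_q Lf_comb !Lf_p -!hc !big_cons !big_nil !mulr1 !subrr !mul0r !mulr0 !addr0 subr0 in E.
have ac : (a < c)%N by rewrite /= ltnSn.
have cb : (c < b)%N by [].
have g0 : (t c - t a) * (t c - t b) < 0.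
  by rewrite pmulr_rlt0 ?subr_gt0 ?subr_lt0 ?tlt.
case: (pickP (fun k => w k * ((t k - t a) * (t k - t b)) < 0)) => [k hk|hn]; last first.
  exfalso; have : 0 <= \sum_k w k * ((t k - t a) * (t k - t b)).
    by apply: sumr_ge0 => k _; rewrite leNgt hn.
  by rewrite E add0r leNgt pmulr_rlt0 // g0.
have wk : w k != 0 by apply: contraTneq hk => ->; rewrite mul0r ltxx.
have gk : (t k - t a) * (t k - t b) < 0.
  by move: hk; rewrite pmulr_rlt0 // lt_neqAle eq_sym wk w0.
have ak : (a < k)%N.
  rewrite ltnNge; apply/negP => ka; move: gk; rewrite ltNge mulr_le0 // sle //.
  exact: leq_trans ka (ltnW (ltn_trans ac cb)).
have kb : (k < b)%N.
  rewrite ltnNge; apply/negP => bk; move: gk; rewrite ltNge mulr_ge0 // sge //.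
  exact: leq_trans (ltnW (ltn_trans ac cb)) bk.
exists k; split => //; exists S => //; split => //; exact: inS wS wk.
Qed.

End Main.

Unset Implicit Arguments.
Local Close Scope ring_scope.

Theorem lemma7 (R : realType) (n : nat) (t : 'I_(n.+2) -> R)
  (T : {set {set 'I_(n.+2)}}) :
  (2 <= n)%N ->
  (forall i j : 'I_(n.+2), (i < j)%N -> (t i < t j)%R) ->
  triangulation t T ->
  persistent n (Gamma T).
Proof.
move=> n2 tm HT; split.
- move=> i i1 iin.
  have iN : (i < n.+2)%N by lia.
  have jN : (i.+1 < n.+2)%N by lia.
  have [S hS [hi hj]] := @cons_edge R n t tm T HT (Ordinal iN) (Ordinal jN) erefl.
  split; [lia|lia|lia|exists S => //; exists (Ordinal iN), (Ordinal jN)] => //.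
- move=> a b c d a1 ab bc cd dn [_ _ _ [S1 h1 [a' [c' [ea ec ha hc]]]]]
    [_ _ _ [S2 h2 [b' [d' [eb ed hb hd]]]]].
  subst.
  have [S hS [aS dS]] := @Xprop R n t tm T HT S1 S2 a' b' c' d' h1 h2 ha hc hb hd ab bc cd.
  split; [lia|lia|lia|exists S => //; exists a', d'] => //.
- move=> a b a1 ab bn [_ _ _ [S0 h0 [a' [b' [ea eb ha hb]]]]].
  subst.
  have [x [ax xb [S hS [aS xS bS]]]] := @bar R n t tm T HT S0 a' b' h0 ha hb ab.
  have e1 : \val a' = nat_of_ord a' := erefl.
  have e2 : \val b' = nat_of_ord b' := erefl.
  exists x; split => //.
  + split; [lia|lia|lia|exists S => //; exists a', x] => //.
  + split; [lia|lia|lia|exists S => //; exists x, b'] => //.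
Qed.
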